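(* Let $G$ be a simple 2-connected plane graph and let $(a,b)$ be an admissible state of $G$. Then $$A(a,b)=\sum_{p}\Big( l(p)(a_p+b_p)^2+2(a_p+b_p)\sum_{v\in p}(b_v-b_p)+\sum_{vv'\in p}(b_v-b_p)(b_{v'}-b_p)\Big)+\sum_{vv'\in p_\infty} b_v b_{v'},$$ where $p$ runs over the bounded faces of $G$, $\sum_{vv'\in p}$ runs over the edges on the boundary of $p$, and $\sum_{vv'\in p_\infty}$ runs over the edges on the boundary of the unbounded face. Every summand on the right-hand side is nonnegative; in particular $A(a,b)\ge 0$.
   Context: A simple 2-connected plane graph $G$ is a simple 2-connected planar graph with a fixed embedding in the plane, so every face is bounded by a cycle. Let $p_\infty$ be the unbounded face. For a face $p$, $l(p)$ is the number of edges on its boundary, $v\in p$ means $v$ is a vertex on the boundary of $p$, and $vv'\in p$ means $vv'$ is an edge on the boundary of $p$. A boundary vertex is a vertex on $p_\infty$. An admissible state $(a,b)$ assigns an integer $a_p$ to each bounded face $p$ and an integer $b_v$ to each vertex $v$ such that $a_p+b_v\ge 0$ whenever $p$ is bounded and $v\in p$, and $b_v\ge 0$ for every boundary vertex $v$ (one sets $a_{p_\infty}=0$). For a bounded face $p$, $b_p=\min_{v\in p} b_v$. Define $$A(a,b)=\sum_{p}\Big(l(p)a_p^2+2a_p\sum_{v\in p}b_v\Big)+2\sum_{vv'\in E(G)} b_vb_{v'},\qquad B(a,b)=2\sum_{v}b_v+\sum_p (l(p)-2)a_p,$$ where $p$ runs over the bounded faces, $v$ over all vertices, and the last sum in $A$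 over all edges of $G$. *)

(* Defs.v *)
(* A plane graph is encoded as a combinatorial map
   (rotation system) of genus 0, the standard combinatorial model of a
   connected graph with a fixed embedding in the plane. *)
From HB Require Import structures.
From mathcomp Require Import all_boot all_order all_algebra.
Set Implicit Arguments. Unset Strict Implicit. Unset Printing Implicit Defensive.
Import Order.TTheory GRing.Theory Num.Theory.
Local Open Scope ring_scope.

Section PlaneGraph.
(* D : darts (half-edges), V : vertices, F : faces.
   e : edge involution (the other half of the same edge),
   n : rotation of the darts around their tail vertex,
   vert d : tail vertex of dart d, fc d : face to the left of d
   (faces are the orbits of the face permutation  d |-> n (e d)). *)
Variables (D V F : finType) (e n : D -> D) (vert : D -> V) (fc : D -> F).

Definition face_perm (d : D) : D := n (e d).

Definition adj (u v : V) : bool := [exists d, (vert d == u) && (vert (e d) == v)].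

Definition graph_edges : {set {set V}} := [set [set vert d; vert (e d)] | d : D].

Definition face_verts (p : F) : {set V} := [set vert d | d in [set d | fc d == p]].
Definition face_edges (p : F) : {set {set V}} :=
  [set [set vert d; vert (e d)] | d in [set d | fc d == p]].

Definition flen (p : F) : nat := #|face_edges p|.

Definition plane_map : Prop :=
  [/\ (forall d, e (e d) = d) /\ (forall d, e d != d) /\ injective n,
      (forall d d', vert d = vert d' <-> fconnect n d d') /\
      (forall v, exists d, vert d = v),
      (forall d d', fc d = fc d' <-> fconnect face_perm d d') /\
      (forall p, exists d, fc d = p),
      (forall d d', connect (fun x y => (y == e x) || (y == n x)) d d')
    & ((#|V| + #|F|) * 2 = #|D| + 4)%N ].

Definition simple_map : Prop :=
  (forall d, vert (e d) != vert d) /\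
  (forall d d', vert d = vert d' -> vert (e d) = vert (e d') -> d = d').

Definition two_connected : Prop :=
  (3 <= #|V|)%N /\
  forall x y z, y != x -> z != x ->
    connect (fun u w => [&& adj u w, u != x & w != x]) y z.

Definition simple_2conn_plane_graph : Prop :=
  [/\ plane_map, simple_map & two_connected].

(* admissible state, pinf being the unbounded face *)
Definition admissible (pinf : F) (a : F -> int) (b : V -> int) : Prop :=
  (forall p v, p != pinf -> v \in face_verts p -> 0 <= a p + b v) /\
  (forall v, v \in face_verts pinf -> 0 <= b v).

(* b_p = min_{v in p} b_v  (the fold starts at a vertex of p) *)
Definition bface (b : V -> int) (p : F) : int :=
  match [pick d | fc d == p] with
  | Some d => \big[Num.min/b (vert d)]_(v in face_verts p) b v
  | None => 0
  end.

Definition Aform (pinf : F) (a : F -> int) (b : V -> int) : int :=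
  \sum_(p | p != pinf)
     ((flen p)%:R * a p ^+ 2 + 2 * a p * \sum_(v in face_verts p) b v)
  + 2 * \sum_(s in graph_edges) \prod_(v in s) b v.

Definition Bform (pinf : F) (a : F -> int) (b : V -> int) : int :=
  2 * \sum_v b v + \sum_(p | p != pinf) ((flen p)%:R - 2) * a p.

End PlaneGraph.

(* Main.v *)
Require Import Defs.
From HB Require Import structures.
From mathcomp Require Import all_boot all_order all_algebra all_fingroup.
From mathcomp Require Import zify ring lra.
Import Order.TTheory GRing.Theory Num.Theory.
Set Implicit Arguments. Unset Strict Implicit. Unset Printing Implicit Defensive.

Section PermCount.
Variable T : finType.
Local Open Scope group_scope.
Definition cyc (s : {perm T}) := #|porbits s|.
Definition mvd (a : {perm T}) := #|[set x | a x != x]|.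

Lemma reduce_inv (a : {perm T}) x : (forall z, a (a z) = z) -> a x != x ->
  [/\ forall z, (tperm x (a x) * a) ((tperm x (a x) * a) z) = z,
      mvd a = (mvd (tperm x (a x) * a)).+2,
      a = tperm x (a x) * (tperm x (a x) * a),
      a = (tperm x (a x) * a) * tperm x (a x)
   & forall z, z != x -> z != a x -> (tperm x (a x) * a) z = a z].
Proof.
move=> aK ax.
have ainj : injective a by exact: perm_inj.
have oth : forall z, z != x -> z != a x -> (tperm x (a x) * a) z = a z.
  by move=> z zx zax; rewrite permM tpermD // eq_sym.
have a'x : (tperm x (a x) * a) x = x by rewrite permM tpermL aK.
have a'ax : (tperm x (a x) * a) (a x) = a x by rewrite permM tpermR.
split => //.
- move=> z; case: (eqVneq z x) => [->|zx]; first by rewrite !a'x.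
  case: (eqVneq z (a x)) => [->|zax]; first by rewrite !a'ax.
  rewrite oth // oth ?aK //.
    by apply: contra_neq zax => /(congr1 a); rewrite aK => ->.
  by apply: contra_neq zx => /ainj.
- rewrite /mvd.
  have -> : [set z | (tperm x (a x) * a) z != z] = [set z | a z != z] :\ x :\ a x.
    apply/setP => z; rewrite !inE.
    case: (eqVneq z (a x)) => [->|zax] /=; first by rewrite a'ax eqxx.
    case: (eqVneq z x) => [->|zx] /=; first by rewrite a'x eqxx.
    by rewrite oth.
  rewrite (cardsD1 x [set z | a z != z]) (cardsD1 (a x) ([set z | a z != z] :\ x)).
  by rewrite !inE ax aK eq_sym ax.

- by rewrite mulgA tperm2 mul1g.
- apply/permP => z; rewrite !permM.
  case: (eqVneq z x) => [->|zx]; first by rewrite (tpermL x (a x)) aK (tpermL x (a x)).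
  case: (eqVneq z (a x)) => [->|zax]; first by rewrite (tpermR x (a x)) (tpermR x (a x)) aK.
  rewrite (tpermD (z:=z)) 1?eq_sym // tpermD //.
    by apply: contra_neq zax => ->; rewrite aK.
  by rewrite (inj_eq ainj) eq_sym.
Qed.

Lemma cyc_mul_tperm_le (s : {perm T}) x y : cyc (tperm x y * s) <= (cyc s).+1.
Proof.
have := porbits_mul_tperm s x y; rewrite /cyc /= -muln2.
case: (x \notin porbit s y); case: (x != y) => /=; lia.
Qed.

Lemma mvd0 (a : {perm T}) : mvd a = 0 -> a = 1.
Proof.
move/eqP; rewrite cards_eq0 => /eqP A0; apply/permP => z.
rewrite perm1; apply/eqP; apply: negbNE; apply/negP => az.
have : z \in [set z | a z != z] by rewrite inE.
by rewrite A0 inE.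
Qed.

Lemma U_aux N : forall (s a : {perm T}), (forall z, a (a z) = z) -> mvd a <= N ->
  (cyc (a * s)).*2 <= (cyc s).*2 + mvd a.
Proof.
elim: N => [|N IH] s a aK aN.
  have /mvd0 -> : mvd a = 0 by lia.
  by rewrite mul1g leq_addr.
case: (posnP (mvd a)) => [/mvd0 ->|mpos]; first by rewrite mul1g leq_addr.
have [x] : exists x, x \in [set z | a z != z].
  by apply/set0Pn; rewrite -card_gt0.
rewrite inE => ax.
have [a'K ma aE _ _] := reduce_inv aK ax.
move: (tperm x (a x) * a) a'K ma aE => a' a'K ma aE.
have le1 : cyc (a * s) <= (cyc (a' * s)).+1.
  by rewrite aE -mulgA; exact: cyc_mul_tperm_le.
have h : mvd a' <= N by move: aN; rewrite ma ltnS => /ltnW.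
have := IH s a' a'K h.
rewrite ma -!muln2; lia.
Qed.

Lemma porbit_connect (s : {perm T}) (r : rel T) w z :
  (forall u, r u (s u)) -> z \in porbit s w -> connect r w z.
Proof.
move=> rs /porbitP [i ->]; rewrite permX.
elim: i => [|i IH] /=; first exact: connect0.
by apply: connect_trans IH (connect1 _); rewrite -(permX s w i); exact: rs.
Qed.

Lemma find_split (s a : {perm T}) :
  (forall x y, connect (fun x y => (y == s x) || (y == a x)) x y) ->
  1 < cyc s -> exists x, a x \notin porbit s x.
Proof.
move=> conn cs.
case: (pickP (fun x => a x \notin porbit s x)) => [x Hx|H]; first by exists x.
exfalso.
have [P] : exists P, P \in porbits s by apply/set0Pn; rewrite -card_gt0 /cyc in cs *; lia.
case/imsetP => x0 _ _.
have cl : closed (fun x y => (y == s x) || (y == a x)) (porbit s x0).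
  move=> z w /orP [/eqP->|/eqP->]; rewrite -!eq_porbit_mem.
    by have := porbit_perm s 1 z; rewrite expg1 => ->.
  have := H z; rewrite /= => /negbFE; rewrite -eq_porbit_mem => /eqP ->.
  done.
have sub : porbits s \subset [set porbit s x0].
  apply/subsetP => Q /imsetP [y _ ->]; rewrite inE.
  have := closed_connect cl (conn x0 y); rewrite porbit_id => /esym.
  by rewrite -eq_porbit_mem.
have := subset_leq_card sub; rewrite cards1 -/(cyc s); lia.
Qed.

Lemma G_aux N : forall (s a : {perm T}), (forall z, a (a z) = z) -> mvd a <= N ->
  (forall x y, connect (fun x y => (y == s x) || (y == a x)) x y) ->
  (cyc (a * s) + cyc s).*2 <= mvd a + 4.
Proof.
elim: N => [|N IH] s a aK aN conn;
  (case: (leqP (cyc s) 1) => cs;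
    [have := @U_aux (mvd a) s a aK (leqnn _); rewrite -!muln2; lia|]);
  have [x axn] := find_split conn cs.
  have /mvd0 a1 : mvd a = 0 by lia.
  by move: axn; rewrite a1 perm1 porbit_id.
have ax : a x != x by apply: contraNneq axn => ->; exact: porbit_id.
have [a'K ma aE aE' oth] := reduce_inv aK ax.
have xn : x \notin porbit s (a x) by rewrite porbit_sym.
have c1 := porbits_mul_tperm s x (a x).
have c2 := porbits_mul_tperm (tperm x (a x) * s) x (a x).
rewrite /= mulgA tperm2 mul1g in c2.
rewrite /= xn eq_sym ax in c1.
have xin : x \in porbit (tperm x (a x) * s) (a x).
  move: c1 c2; rewrite /=; case: (x \in _) => //=; rewrite eq_sym ax; lia.
have a'x : (tperm x (a x) * a) x = x by rewrite permM tpermL aK.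
have a'ax : (tperm x (a x) * a) (a x) = a x by rewrite permM tpermR.
set t := tperm x (a x) in a'K ma aE aE' oth c1 c2 xin a'x a'ax.
set s' := t * s in c1 c2 xin.
set a' := t * a in a'K ma aE aE' oth a'x a'ax.
have E : a * s = a' * s' by rewrite {1}aE' /s' mulgA.
have s'E : forall z, s' z = s (t z) by move=> z; rewrite permM.
set r' := (fun x0 y0 => (y0 == s' x0) || (y0 == a' x0)).
have rs' : forall u, r' u (s' u) by move=> u; rewrite /r' eqxx.
have ra' : forall u, r' u (a' u) by move=> u; rewrite /r' eqxx orbT.
have cyx : connect r' (a x) x by exact: porbit_connect xin.
have cxy : connect r' x (a x) by apply: porbit_connect rs' _; rewrite porbit_sym.
have conn' : forall u w, connect r' u w.
  move=> u w; apply: (connect_sub _ (conn u w)) => z w' /orP [/eqP->|/eqP->].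
    case: (eqVneq z x) => [->|zx].
      apply: connect_trans cxy (connect1 _).
      have h := rs' (a x); rewrite s'E /t tpermR in h; exact: h.
    case: (eqVneq z (a x)) => [->|zax].
      apply: connect_trans cyx (connect1 _); have h := rs' x; rewrite s'E /t tpermL in h; exact: h.
    have e : tperm x (a x) z = z by rewrite tpermD // eq_sym.
    apply: connect1; have h := rs' z; rewrite s'E /t e in h; exact: h.
  case: (eqVneq z x) => [->|zx]; first exact: cxy.
  case: (eqVneq z (a x)) => [->|zax]; first by rewrite aK.
  by apply: connect1; rewrite -oth //; exact: ra'.
have h : mvd a' <= N by move: aN; rewrite ma ltnS => /ltnW.
have := IH s' a' a'K h conn'.
have cs' : cyc s = (cyc s').+1 by move: c1; rewrite /cyc /= addn2 addn1 => -[->].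
rewrite E cs' ma.
move: (cyc (a' * s')) (cyc s') (mvd a') => p q w.
rewrite -!muln2; lia.
Qed.
End PermCount.

Lemma fconn_porbit (T : finType) (f : T -> T) (p : {perm T}) :
  p =1 f -> forall x y, fconnect f x y = (y \in porbit p x).
Proof.
move=> pf x y; apply/idP/idP.
  move/iter_findex <-; rewrite -(eq_iter pf) -permX; exact: mem_porbit.
by case/porbitP => i ->; rewrite permX (eq_iter pf); exact: fconnect_iter.
Qed.

Lemma card_orbits (T U : finType) (p : {perm T}) (f : T -> U) (x0 : T) :
  (forall x y, f x = f y <-> y \in porbit p x) -> (forall u, exists x, f x = u) ->
  #|U| = #|porbits p|.
Proof.
move=> fE fs.
have -> : #|U| = #|f @: T|.
  rewrite -cardsT; apply: eq_card => u; rewrite inE.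
  by have [x <-] := fs u; rewrite imset_f.
pose g (S : {set T}) := odflt (f x0) (omap f [pick x in S]).
have gE : forall x, g (porbit p x) = f x.
  move=> x; rewrite /g; case: pickP => [y yin|H] /=.
    by apply/esym/fE.
  by have := H x; rewrite porbit_id.
have -> : f @: T = g @: porbits p.
  rewrite /porbits -imset_comp; apply: eq_imset => x /=; by rewrite gE.
apply: card_in_imset => _ _ /imsetP [x _ ->] /imsetP [y _ ->].
rewrite !gE => /fE yin; apply/eqP; rewrite eq_sym eq_porbit_mem //.
Qed.

Lemma set2_eq (T : finType) (a b c d : T) :
  [set a; b] = [set c; d] -> a != b -> (a = c /\ b = d) \/ (a = d /\ b = c).
Proof.
move=> E ab.
have /set2P [ac|ad] : a \in [set c; d] by rewrite -E set21.
  left; split => //.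
  have /set2P [bc|//] : b \in [set c; d] by rewrite -E set22.
  by move: ab; rewrite ac bc eqxx.
right; split => //.
have /set2P [//|bd] : b \in [set c; d] by rewrite -E set22.
by move: ab; rewrite ad bd eqxx.
Qed.

Section Map.
Variables (D V F : finType) (e n : D -> D) (vert : D -> V) (fc : D -> F).
Hypothesis eK : forall d, e (e d) = d.
Hypothesis eD : forall d, e d != d.
Hypothesis ninj : injective n.
Hypothesis vertE : forall d d', vert d = vert d' <-> fconnect n d d'.
Hypothesis vsurj : forall v, exists d, vert d = v.
Hypothesis fcE : forall d d', fc d = fc d' <-> fconnect (face_perm e n) d d'.
Hypothesis fsurj : forall p, exists d, fc d = p.
Hypothesis euler : ((#|V| + #|F|) * 2 = #|D| + 4)%N.
Hypothesis simp1 : forall d, vert (e d) != vert d.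
Hypothesis simp2 : forall d d', vert d = vert d' -> vert (e d) = vert (e d') -> d = d'.
Hypothesis V3 : (3 <= #|V|)%N.
Hypothesis tc : forall x y z, y != x -> z != x ->
    connect (fun u w => [&& adj e vert u w, u != x & w != x]) y z.

Lemma vert_n d : vert (n d) = vert d.
Proof. by apply/esym/vertE; exact: fconnect1. Qed.

Lemma vert_iter k d : vert (iter k n d) = vert d.
Proof. by elim: k => //= k IH; rewrite vert_n. Qed.

Lemma fc_phi d : fc (n (e d)) = fc d.
Proof. by apply/esym/fcE; exact: (fconnect1 (face_perm e n)). Qed.

Lemma e_inj : injective e. Proof. exact: can_inj eK. Qed.

Definition pn := perm ninj.
Definition pe := perm e_inj.
Definition pf := (pe * pn)%g.
Lemma pfE x : pf x = n (e x). Proof. by rewrite permM !permE. Qed.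

Lemma dart0 : exists d : D, true.
Proof.
have : (0 < #|V|)%N by lia.
case/card_gt0P => v _.
by have [d _] := vsurj v; exists d.
Qed.

Lemma cardV : #|V| = cyc pn.
Proof.
have [d0 _] := dart0.
apply: (card_orbits (f:=vert) d0) => // x y.
by rewrite vertE (fconn_porbit (permE ninj)).
Qed.

Lemma cardF : #|F| = cyc pf.
Proof.
have [d0 _] := dart0.
apply: (card_orbits (f:=fc) d0) => // x y.
by rewrite fcE (fconn_porbit (p:=pf)) // => z; rewrite pfE.
Qed.

Lemma mvd_pe : mvd pe = #|D|.
Proof.
rewrite /mvd -cardsT; apply: eq_card => z; rewrite !inE permE.
exact: eD.
Qed.

Lemma jordan d1 d2 : fc d1 = fc d2 -> vert d1 = vert d2 -> d1 = d2.
Proof.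
move=> f12 v12; case: (eqVneq d1 d2) => // neq; exfalso.
set x1 := (pf^-1)%g d1; set x2 := (pf^-1)%g d2.
have hx1 : n (e x1) = d1 by rewrite -pfE permKV.
have hx2 : n (e x2) = d2 by rewrite -pfE permKV.
set u := e x1; set w := e x2.
have vu : vert u = vert d1 by rewrite -hx1 vert_n.
have vw : vert w = vert d1 by rewrite v12 -hx2 vert_n.
have uw : u != w.
  by apply: contra_neq neq => /e_inj ux; rewrite -hx1 -hx2 ux.
have x12 : x1 != x2.
  by apply: contra_neq neq => ux; rewrite -hx1 -hx2 ux.
have win : w \in porbit pn u by rewrite -(fconn_porbit (permE ninj)); apply/vertE; rewrite vu vw.
have x2in : x2 \in porbit pf x1.
  rewrite -(fconn_porbit (f:=face_perm e n) (p:=pf)); last by move=> z; rewrite pfE.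
  by apply/fcE; rewrite -fc_phi hx1 -[fc x2]fc_phi hx2.
set t := tperm u w.
set s' := (t * pn)%g.
have cs' : cyc s' = (cyc pn).+1.
  have := porbits_mul_tperm pn u w; rewrite /= -/t -/s' porbit_sym win uw /cyc.
  by rewrite addn0 addn1.
have fE : (pe * s')%g = (tperm x1 x2 * pf)%g.
  apply/permP => z; rewrite !permM /pe !(permE e_inj).
  by rewrite (inj_tperm _ _ _ e_inj).
have cf' : cyc (pe * s') = (cyc pf).+1.
  rewrite fE.
  have := porbits_mul_tperm pf x1 x2; rewrite /= porbit_sym x2in x12 /cyc.
  by rewrite addn0 addn1.
have peK : forall z, pe (pe z) = z by move=> z; rewrite !permE eK.
set v0 := vert d1.
set r' := (fun x y => (y == s' x) || (y == pe x)).
have s'E : forall z, vert z != v0 -> s' z = n z.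
  move=> z zv; rewrite permM permE /t tpermD //.
    by apply: contra_neq zv => <-.
  by apply: contra_neq zv => <-.
have C1 : forall z z', vert z = vert z' -> vert z != v0 -> connect r' z z'.
  move=> z z' /vertE /iter_findex <-.
  elim: (findex n z z') => [|k IH] zv; first exact: connect0.
  apply: connect_trans (IH zv) (connect1 _) => /=.
  by rewrite /r' s'E ?eqxx // vert_iter.
have C2 : forall a b, a != v0 ->
    connect (fun u w => [&& adj e vert u w, u != v0 & w != v0]) a b ->
    forall z z', vert z = a -> vert z' = b -> connect r' z z'.
  move=> a b av /connectP [p pth ->] {b}.
  elim: p a av pth => [|b p IH] a av /= pth z z' za zb.
    by apply: C1; rewrite ?za ?zb.
  case/andP: pth => /and3P [/existsP [dd /andP [/eqP dda /eqP ddb]] _ bv] pth.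
  apply: connect_trans (C1 z dd _ _) _; first by rewrite za dda.
    by rewrite za.
  have rd : r' dd (e dd) by rewrite /r' /pe permE eqxx orbT.
  apply: connect_trans (connect1 rd) _.
  exact: IH bv pth (e dd) z' ddb zb.
have C3 : forall z, exists2 z0, vert z0 != v0 & connect r' z z0 /\ connect r' z0 z.
  move=> z; case: (eqVneq (vert z) v0) => zv; last first.
    by exists z => //; split; exact: connect0.
  exists (e z); first by rewrite -zv simp1.
  split; apply: connect1; rewrite /r' /pe permE ?eK eqxx orbT //.
have conn' : forall z z', connect r' z z'.
  move=> z z'.
  have [z0 z0v [c1 _]] := C3 z.
  have [z0' z0v' [_ c2]] := C3 z'.
  apply: connect_trans c1 (connect_trans _ c2).
  exact: (C2 _ _ z0v (tc z0v z0v') z0 z0' erefl erefl).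
have := G_aux peK (leqnn _) conn'.
rewrite cs' cf' mvd_pe -cardV -cardF -euler.
rewrite -!muln2; lia.
Qed.

Local Open Scope ring_scope.
Let jor := jordan.
Let vn := vert_n.
Let fcphi := fc_phi.

Notation Sp p := [set d | fc d == p].
Notation Ed d := [set vert d; vert (e d)].

Lemma fcpf d : fc (n (e d)) = fc d. Proof. exact: fcphi. Qed.

Lemma vert_inj_Sp p : {in Sp p &, injective vert}.
Proof.
move=> d d'; rewrite !inE => /eqP dp /eqP d'p; apply: jor; by rewrite dp d'p.
Qed.

Lemma no_fixed_n d : n d = d -> False.
Proof.
move=> nd.
set w := vert d; set x := vert (e d).
have xw : w != x by rewrite eq_sym simp1.
case: (pickP (fun z => z \notin [set w; x])) => [z zn|H]; last first.
  have : [set: V] \subset [set w; x].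
    by apply/subsetP => z _; have := H z; rewrite /= => /negbFE.
  move/subset_leq_card; rewrite cardsT cards2; lia.
move: zn; rewrite !inE negb_or => /andP [zw zx].
have /connectP [p pth zE] := tc xw zx.
case: p pth zE => [|w1 p] /=; first by move=> _ zE; move: zw; rewrite zE eqxx.
case/andP => /and3P [/existsP [dd /andP [/eqP ddw /eqP ddw1]] _ w1x] _ _.
have : fconnect n d dd by apply/vertE.
move/iter_findex; have -> : forall k, iter k n d = d by elim => //= k ->.
by move=> ddE; move: w1x; rewrite -ddw1 -ddE eqxx.
Qed.

Lemma edge_inj p : {in Sp p &, injective (fun d => Ed d)}.
Proof.
move=> d d' dS d'S /= E.
have [[h1 h2]|[h1 h2]] := set2_eq E (ltac:(by rewrite eq_sym simp1)).
  exact: vert_inj_Sp dS d'S h1.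
exfalso.
have d'E : d' = e d by apply: simp2; rewrite ?eK.
have : d' = n (e d).
  have nS : n (e d) \in Sp p by rewrite inE fcpf; rewrite inE in dS.
  by apply: (vert_inj_Sp d'S nS); rewrite vn h2.
by rewrite -d'E => /esym; apply: no_fixed_n.
Qed.

Lemma flen_eq p : flen e vert fc p = #|Sp p|.
Proof. by rewrite /flen /face_edges card_in_imset //; exact: edge_inj. Qed.

Lemma sum_fv p (f : V -> int) :
  \sum_(v in face_verts vert fc p) f v = \sum_(d in Sp p) f (vert d).
Proof. by rewrite /face_verts big_imset //; exact: vert_inj_Sp. Qed.

Lemma sum_fe p (g : {set V} -> int) :
  \sum_(s in face_edges e vert fc p) g s = \sum_(d in Sp p) g (Ed d).
Proof. by rewrite /face_edges big_imset //; exact: edge_inj. Qed.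

Lemma prod2 d (f : V -> int) : \prod_(v in Ed d) f v = f (vert d) * f (vert (e d)).
Proof.
rewrite big_setU1 ?big_set1 // inE eq_sym; exact: simp1.
Qed.

Lemma sum_e p (f : V -> int) :
  \sum_(d in Sp p) f (vert (e d)) = \sum_(d in Sp p) f (vert d).
Proof.
rewrite [RHS](reindex_inj (perm_inj (s := pf))) /=.
apply: eq_big => d; first by rewrite !inE pfE fcpf.
by rewrite pfE vn.
Qed.

Lemma sum_part (G : D -> int) : \sum_p \sum_(d in Sp p) G d = \sum_d G d.
Proof.
rewrite [RHS](partition_big fc predT) //=.
by apply: eq_bigr => p _; apply: eq_bigl => d; rewrite inE.
Qed.

Lemma Ed_eq d0 i : (Ed i == Ed d0) = (i \in [set d0; e d0]).
Proof.
apply/eqP/set2P => [E|[->|->]] //.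
  have [[h1 h2]|[h1 h2]] := set2_eq E (ltac:(by rewrite eq_sym simp1)).
    by left; apply: simp2.
  by right; apply: simp2; rewrite ?eK.
by rewrite eK setUC.
Qed.

Lemma sum_ge (G : {set V} -> int) :
  \sum_d G (Ed d) = 2 * \sum_(s in graph_edges e vert) G s.
Proof.
have -> : \sum_d G (Ed d) = \sum_(d in [set: D]) G (Ed d).
  by apply: eq_bigl => d; rewrite inE.
rewrite (partition_big_imset (fun d => Ed d)).
have -> : [set Ed d | d in [set: D]] = graph_edges e vert.
  by apply/setP => s; apply/imsetP/imsetP => [[d _ ->]|[d _ ->]]; exists d.
rewrite mulr_sumr; apply: eq_bigr => s /imsetP [d0 _ ->].
rewrite (eq_bigr (fun _ => G (Ed d0))); last by move=> i /andP [_ /eqP ->].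
have -> : \sum_(i in [set: D] | Ed i == Ed d0) G (Ed d0) = G (Ed d0) *+ #|[set d0; e d0]|.
  rewrite -sumr_const; apply: eq_bigl => i; by rewrite inE Ed_eq.
by rewrite cards2 eq_sym eD mulr_natl.
Qed.

Lemma ident_sec (pinf : F) (a : F -> int) (b : V -> int) :
  Aform e vert fc pinf a b =
        \sum_(p | p != pinf)
          ((flen e vert fc p)%:R * (a p + bface vert fc b p) ^+ 2
           + 2 * (a p + bface vert fc b p) * \sum_(v in face_verts vert fc p) (b v - bface vert fc b p)
           + \sum_(s in face_edges e vert fc p) \prod_(v in s) (b v - bface vert fc b p))
        + \sum_(s in face_edges e vert fc pinf) \prod_(v in s) b v.
Proof.
rewrite /Aform.
set PP := fun p => \sum_(d in Sp p) b (vert d) * b (vert (e d)).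
have Rp : forall p,
   (flen e vert fc p)%:R * (a p + bface vert fc b p) ^+ 2
   + 2 * (a p + bface vert fc b p) * \sum_(v in face_verts vert fc p) (b v - bface vert fc b p)
   + \sum_(s in face_edges e vert fc p) \prod_(v in s) (b v - bface vert fc b p)
   = ((flen e vert fc p)%:R * a p ^+ 2 + 2 * a p * \sum_(v in face_verts vert fc p) b v) + PP p.
  move=> p; set β := bface vert fc b p; set A := a p.
  rewrite !sum_fv sum_fe flen_eq /PP.
  rewrite (eq_bigr _ (fun d _ => prod2 d (fun v => b v - β))).
  have cst : forall X : int, #|Sp p|%:R * X = \sum_(d in Sp p) X.
    by move=> X; rewrite sumr_const mulr_natl.
  rewrite !cst !mulr_sumr.
  have Z : \sum_(d in Sp p) β * (b (vert d) - b (vert (e d))) = 0.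
    by rewrite -mulr_sumr sumrB sum_e subrr mulr0.
  transitivity (\sum_(d in Sp p) ((A + β) ^+ 2 + 2 * (A + β) * (b (vert d) - β)
      + (b (vert d) - β) * (b (vert (e d)) - β))).
    by rewrite !big_split.
  transitivity (\sum_(d in Sp p) (A ^+ 2 + 2 * A * b (vert d)
      + b (vert d) * b (vert (e d)) + β * (b (vert d) - b (vert (e d))))).
    by apply: eq_bigr => d _; ring.
  by rewrite big_split /= Z addr0 !big_split.
rewrite (eq_bigr _ (fun p _ => Rp p)) [in RHS]big_split /=.
rewrite sum_fe (eq_bigr _ (fun d _ => prod2 d b)).
rewrite -addrA; congr (_ + _).
rewrite -sum_ge (eq_bigr _ (fun d _ => prod2 d b)) -sum_part (bigD1 pinf) //= addrC.
done.
Qed.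

Lemma main_sec (pinf : F) (a : F -> int) (b : V -> int) :
  admissible vert fc pinf a b ->
  let bp := bface vert fc b in
  [/\ Aform e vert fc pinf a b =
        \sum_(p | p != pinf)
          ((flen e vert fc p)%:R * (a p + bp p) ^+ 2
           + 2 * (a p + bp p) * \sum_(v in face_verts vert fc p) (b v - bp p)
           + \sum_(s in face_edges e vert fc p) \prod_(v in s) (b v - bp p))
        + \sum_(s in face_edges e vert fc pinf) \prod_(v in s) b v,
      (forall p, p != pinf ->
        [/\ 0 <= (flen e vert fc p)%:R * (a p + bp p) ^+ 2,
            0 <= 2 * (a p + bp p) * \sum_(v in face_verts vert fc p) (b v - bp p),
            (forall v, v \in face_verts vert fc p -> 0 <= (a p + bp p) * (b v - bp p)),
            0 <= \sum_(s in face_edges e vert fc p) \prod_(v in s) (b v - bp p)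
          & (forall s, s \in face_edges e vert fc p -> 0 <= \prod_(v in s) (b v - bp p))]),
      0 <= \sum_(s in face_edges e vert fc pinf) \prod_(v in s) b v,
      (forall s, s \in face_edges e vert fc pinf -> 0 <= \prod_(v in s) b v)
    & 0 <= Aform e vert fc pinf a b].
Proof.
move=> [adm1 adm2] bp.
have fvS : forall d, vert d \in face_verts vert fc (fc d).
  by move=> d; apply/imsetP; exists d; rewrite ?inE.
have fvE : forall d, vert (e d) \in face_verts vert fc (fc d).
  by move=> d; rewrite -vn -[fc d]fcpf; exact: fvS.
have sub_fe : forall p s v, s \in face_edges e vert fc p -> v \in s -> v \in face_verts vert fc p.
  move=> p s v /imsetP [d]; rewrite inE => /eqP <- -> /set2P [->|->]; [exact: fvS|exact: fvE].
have bpP : forall p, exists2 w, w \in face_verts vert fc p &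
    bp p = b w /\ (forall v, v \in face_verts vert fc p -> bp p <= b v).
  move=> p; rewrite /bp /bface; case: pickP => [d0 /eqP d0p | H]; last first.
    by have [d hd] := fsurj p; have := H d; rewrite hd eqxx.
  have vd0 : vert d0 \in face_verts vert fc p by rewrite -d0p fvS.
  set m := \big[Num.min/b (vert d0)]_(v in face_verts vert fc p) b v.
  have mle : forall v, v \in face_verts vert fc p -> m <= b v.
    by move=> v vS; exact: bigmin_le_cond.
  have [w wS mw] : exists2 w, w \in face_verts vert fc p & m = b w.
    apply: (big_ind (fun x => exists2 w, w \in face_verts vert fc p & x = b w)).
    - by exists (vert d0).
    - move=> x y [wx wxS ->] [wy wyS ->]; rewrite minEle.
      by case: ifP => _; [exists wx|exists wy].
    - by move=> v vS; exists v.
  by exists w.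
have nnp : forall p, p != pinf ->
        [/\ 0 <= (flen e vert fc p)%:R * (a p + bp p) ^+ 2,
            0 <= 2 * (a p + bp p) * \sum_(v in face_verts vert fc p) (b v - bp p),
            (forall v, v \in face_verts vert fc p -> 0 <= (a p + bp p) * (b v - bp p)),
            0 <= \sum_(s in face_edges e vert fc p) \prod_(v in s) (b v - bp p)
          & (forall s, s \in face_edges e vert fc p -> 0 <= \prod_(v in s) (b v - bp p))].
  move=> p pP.
  have [w wS [bw bmin]] := bpP p.
  have apb : 0 <= a p + bp p by rewrite bw; exact: adm1.
  have bvb : forall v, v \in face_verts vert fc p -> 0 <= b v - bp p.
    by move=> v vS; rewrite subr_ge0 bmin.
  have fe0 : forall s, s \in face_edges e vert fc p -> 0 <= \prod_(v in s) (b v - bp p).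
    by move=> s sS; apply: prodr_ge0 => v vs; apply: bvb; exact: sub_fe sS vs.
  split.
  - by apply: mulr_ge0; [exact: ler0n|exact: sqr_ge0].
  - apply: mulr_ge0; first by apply: mulr_ge0.
    by apply: sumr_ge0 => v vS; exact: bvb.
  - by move=> v vS; apply: mulr_ge0 => //; exact: bvb.
  - by apply: sumr_ge0 => s sS; exact: fe0.
  - exact: fe0.
have fi0 : forall s, s \in face_edges e vert fc pinf -> 0 <= \prod_(v in s) b v.
  by move=> s sS; apply: prodr_ge0 => v vs; apply: adm2; exact: sub_fe sS vs.
have ident := ident_sec pinf a b.
split => //.
- by apply: sumr_ge0 => s sS; exact: fi0.
rewrite ident; apply: addr_ge0; last by apply: sumr_ge0 => s sS; exact: fi0.
apply: sumr_ge0 => p pP; have [h1 h2 _ h4 _] := nnp p pP.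
by apply: addr_ge0; [apply: addr_ge0|].
Qed.
End Map.

Unset Implicit Arguments.
Local Open Scope ring_scope.

Theorem theorem1p2 (D V F : finType) (e n : D -> D) (vert : D -> V) (fc : D -> F)
  (pinf : F) (a : F -> int) (b : V -> int) :
  simple_2conn_plane_graph e n vert fc ->
  admissible vert fc pinf a b ->
  let bp := bface vert fc b in
  [/\ Aform e vert fc pinf a b =
        \sum_(p | p != pinf)
          ((flen e vert fc p)%:R * (a p + bp p) ^+ 2
           + 2 * (a p + bp p) * \sum_(v in face_verts vert fc p) (b v - bp p)
           + \sum_(s in face_edges e vert fc p) \prod_(v in s) (b v - bp p))
        + \sum_(s in face_edges e vert fc pinf) \prod_(v in s) b v,
      (forall p, p != pinf ->
        [/\ 0 <= (flen e vert fc p)%:R * (a p + bp p) ^+ 2,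
            0 <= 2 * (a p + bp p) * \sum_(v in face_verts vert fc p) (b v - bp p),
            (forall v, v \in face_verts vert fc p -> 0 <= (a p + bp p) * (b v - bp p)),
            0 <= \sum_(s in face_edges e vert fc p) \prod_(v in s) (b v - bp p)
          & (forall s, s \in face_edges e vert fc p -> 0 <= \prod_(v in s) (b v - bp p))]),
      0 <= \sum_(s in face_edges e vert fc pinf) \prod_(v in s) b v,
      (forall s, s \in face_edges e vert fc pinf -> 0 <= \prod_(v in s) b v)
    & 0 <= Aform e vert fc pinf a b].
Proof.
case=> [[[eK [eD ninj]] [vertE vsurj] [fcE fsurj] _ euler] [simp1 simp2] [V3 tc]].
exact: (main_sec eK eD ninj vertE vsurj fcE fsurj euler simp1 simp2 V3 tc).
Qed.
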